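(* Let $X=\{X_t\}_{t=0}^T$ be a state process with $X_0\in\mathring{\mathcal{X}}_R$ and $X_{t+1}=S(X_t,a_t,\varepsilon_{t+1})$, $t=0,\dots,T-1$, where ${\sf a}=\{a_t\}_{t=0}^{T-1}$ is any $\{\mathcal{F}_t\}$-adapted process. Define $\tau^R=\inf\{t\in\{0,\dots,T\}: X_t\notin\mathring{\mathcal{X}}_R\}$ (with $\inf\emptyset=\infty$), and $X_0^R=X_0$, $X_t^R=X_t\mathbb{I}_{\{\tau^R>t\}}+\mathcal{Q}(X_{\tau^R\wedge t})\mathbb{I}_{\{\tau^R\le t\}}$ for $t=1,\dots,T$. Then: (i) $\{\tau^R\le t\}=\{X_t^R\in\partial\mathcal{X}_R\}$ for $t=1,2,\dots,T$; (ii) $\{\tau^R=t+1\}=\{X_t^R\in\mathring{\mathcal{X}}_R,\ S(X_t^R,a_t,\varepsilon_{t+1})\notin\mathring{\mathcal{X}}_R\}$ for $t=0,1,\dots,T-1$.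
   Context: $(\Omega,\mathcal{F},\mathbb{P})$ is a probability space with filtration $\{\mathcal{F}_t\}_{t=0}^T$; $\varepsilon_1,\dots,\varepsilon_T$ are independent $\mathbb{R}^q$-valued random variables; $S:\mathbb{R}^d\times\mathbb{R}^p\times\mathbb{R}^q\to\mathbb{R}^d$ is measurable and $X$ takes values in $\mathcal{X}\subseteq\mathbb{R}^d$. $\mathcal{X}_R\subseteq\mathcal{X}$ is a bounded set with interior $\mathring{\mathcal{X}}_R$, boundary $\partial\mathcal{X}_R$, and compact strictly convex closure $\mathrm{cl}(\mathcal{X}_R)$; $\mathcal{Q}(x)=\arg\inf_{y\in\mathrm{cl}(\mathcal{X}_R)}\|y-x\|$ is the Euclidean nearest-point projection onto $\mathrm{cl}(\mathcal{X}_R)$, which lies in $\partial\mathcal{X}_R$ for $x\notin\mathring{\mathcal{X}}_R$. *)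

(* Defs.v *)
From HB Require Import structures.
From mathcomp Require Import all_boot all_order all_algebra.
From mathcomp Require Import all_classical all_reals all_analysis.
Set Implicit Arguments. Unset Strict Implicit. Unset Printing Implicit Defensive.
Import Order.TTheory GRing.Theory Num.Theory.
Import numFieldNormedType.Exports.
Local Open Scope classical_set_scope.
Local Open Scope ring_scope.

Definition enorm (R : realType) (d : nat) (v : 'rV[R]_d) : R :=
  Num.sqrt (\sum_(i < d) v ord0 i ^+ 2).

Definition boundary (R : realType) (d : nat) (A : set 'rV[R]_d) : set 'rV[R]_d :=
  closure A `\` A°.

Definition strictly_convex (R : realType) (d : nat) (C : set 'rV[R]_d) : Prop :=
  forall x y : 'rV[R]_d, C x -> C y -> x != y ->
    forall l : R, 0 < l < 1 -> (C°) (l *: x + (1 - l) *: y).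

Definition is_nearest_projection (R : realType) (d : nat) (C : set 'rV[R]_d)
  (Q : 'rV[R]_d -> 'rV[R]_d) : Prop :=
  forall x, C (Q x) /\ forall y, C y -> enorm (Q x - x) <= enorm (y - x).

(* First time n in {0,...,T} with P n; None encodes inf emptyset = infinity. *)
Definition first_time (T : nat) (P : nat -> Prop) : option nat :=
  match pselect (exists n, (fun n => (n <= T)%N && `[< P n >]) n) with
  | left h => Some (ex_minn h)
  | right _ => None
  end.

Definition ole (tau : option nat) (t : nat) : Prop :=
  if tau is Some s then (s <= t)%N else False.

Definition XRproc (R : realType) (d : nat) (Omega : Type)
  (Q : 'rV[R]_d -> 'rV[R]_d) (X : nat -> Omega -> 'rV[R]_d)
  (tau : Omega -> option nat) (t : nat) (w : Omega) : 'rV[R]_d :=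
  if t is 0 then X 0%N w else
  match tau w with
  | Some s => if (s <= t)%N then Q (X (minn s t) w) else X t w
  | None => X t w
  end.

(* Main.v *)
Require Import Defs.
From HB Require Import structures.
From mathcomp Require Import all_boot all_order all_algebra.
From mathcomp Require Import all_classical all_reals all_analysis ring lra.
Import Order.TTheory GRing.Theory Num.Theory.
Import numFieldNormedType.Exports.
Local Open Scope classical_set_scope.
Local Open Scope ring_scope.

Lemma enormZ (R : realType) d (c : R) (v : 'rV[R]_d) :
  enorm (c *: v) = `|c| * enorm v.
Proof.
rewrite /enorm; under eq_bigr => i _ do rewrite mxE exprMn.
by rewrite -mulr_sumr sqrtrM ?sqr_ge0 // sqrtr_sqr.
Qed.

Lemma enorm_gt0 (R : realType) d (v : 'rV[R]_d) : v != 0 -> 0 < enorm v.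
Proof.
move=> v0; rewrite /enorm sqrtr_gt0.
case: (pickP (fun j => v ord0 j != 0)) => [j Hj | H]; last first.
  case/eqP: v0; apply/matrixP => i j; rewrite (ord1 i) !mxE.
  by move: (H j) => /= /negbFE/eqP.
rewrite (bigD1 j) //=; apply: ltr_pwDl.
  by rewrite lt0r sqrf_eq0 Hj sqr_ge0.
by apply: sumr_ge0 => i _; apply: sqr_ge0.
Qed.

Lemma proj_bd (R : realType) d (C : set 'rV[R]_d) (Q : 'rV[R]_d -> 'rV[R]_d) x :
  is_nearest_projection (closure C) Q -> ~ (C°) x ->
  boundary C (Q x).
Proof.
move=> HQ Hx; have [HC Hmin] := HQ x; split => // Hi.
set y := Q x in HC Hmin Hi.
have xy : x != y by apply/eqP => exy; apply: Hx; rewrite exy.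
have /nbhs_ballP [e /= e0 He] : nbhs y C by [].
set n := `|x - y|.
have n0 : 0 < n by rewrite normr_gt0 subr_eq0.
set l := Num.min (1/2) (e / (2 * n)).
have l0 : 0 < l by rewrite lt_min; apply/andP; split; [|apply: divr_gt0]; rewrite ?mulr_gt0 //.
have l1 : l < 1 by rewrite gt_min; apply/orP; left; rewrite ltr_pdivrMr // mul1r ltr1n.
have lne : l * n < e.
  have : l <= e / (2 * n) by rewrite ge_min lexx orbT.
  rewrite -(ler_pM2r n0) => h; apply: (le_lt_trans h).
  have -> : e / (2 * n) * n = e / 2 by field; rewrite gt_eqF.
  lra.
set z := y + l *: (x - y).
have Cz : C z.
  apply: He; rewrite -ball_normE /ball_ /=. rewrite /z opprD addrA subrr add0r normrN normrZ.
  by rewrite gtr0_norm.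
have := Hmin z (subset_closure Cz).
have -> : z - x = (1 - l) *: (y - x).
  rewrite /z scalerBl scale1r -(opprB y x) scalerN.
  by rewrite addrAC.
rewrite enormZ gtr0_norm ?subr_gt0 //.
have ny : 0 < enorm (y - x) by apply: enorm_gt0; rewrite subr_eq0 eq_sym.
rewrite mulrBl mul1r => h.
have : 0 < l * enorm (y - x) by rewrite mulr_gt0.
lra.
Qed.

Lemma ft_some {T} {P : nat -> Prop} {s} : first_time T P = Some s ->
  [/\ (s <= T)%N, P s & forall n, (n < s)%N -> ~ P n].
Proof.
rewrite /first_time; case: pselect => // h [<-].
case: (ex_minnP h) => m /andP[mT /asboolP Pm] mn; split => // n ns Pn.
move: (mn n); rewrite (leq_trans (ltnW ns) mT) (asboolT Pn) /= => /(_ isT).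
by rewrite leqNgt ns.
Qed.

Lemma ft_none {T} {P : nat -> Prop} : first_time T P = None ->
  forall n, (n <= T)%N -> ~ P n.
Proof.
rewrite /first_time; case: pselect => // h _ n nT Pn; apply: h.
by exists n; rewrite nT asboolT.
Qed.

Theorem lemma1 (R : realType) (d p q T : nat) (Omega : Type)
  (S : 'rV[R]_d -> 'rV[R]_p -> 'rV[R]_q -> 'rV[R]_d)
  (Xs XR : set 'rV[R]_d) (Q : 'rV[R]_d -> 'rV[R]_d)
  (X : nat -> Omega -> 'rV[R]_d) (a : nat -> Omega -> 'rV[R]_p)
  (eps : nat -> Omega -> 'rV[R]_q) :
  XR `<=` Xs ->
  bounded_set XR ->
  compact (closure XR) ->
  strictly_convex (closure XR) ->
  is_nearest_projection (closure XR) Q ->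
  (forall t w, (t <= T)%N -> Xs (X t w)) ->
  (forall w, (XR°) (X 0%N w)) ->
  (forall t w, (t < T)%N -> X t.+1 w = S (X t w) (a t w) (eps t.+1 w)) ->
  let tau := fun w => first_time T (fun t => ~ (XR°) (X t w)) in
  let XRt := XRproc Q X tau in
  (forall t, (1 <= t <= T)%N ->
     [set w | ole (tau w) t] = [set w | boundary XR (XRt t w)]) /\
  (forall t, (t < T)%N ->
     [set w | tau w = Some t.+1] =
     [set w | (XR°) (XRt t w) /\ ~ (XR°) (S (XRt t w) (a t w) (eps t.+1 w))]).
Proof.
move=> _ _ _ _ HQ _ H0 HS tau XRt.
have notI n w : (n <= T)%N -> (forall s, tau w = Some s -> (n < s)%N) ->
    (XR°) (X n w).
  move=> nT Hs; apply: contrapT => Pn; case E: (tau w) => [s|].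
    by have [_ _ Hmin] := ft_some E; exact: (Hmin n (Hs s E)) Pn.
  by exact: (ft_none E n nT Pn).
have XRE t w : (forall s, tau w = Some s -> (t < s)%N) -> XRt t w = X t w.
  rewrite /XRt /XRproc; case: t => // t H.
  case E: (tau w) => [s|] //; have := H s E.
  by rewrite ltnNge => /negbTE ->.
have part1 : forall t, (1 <= t <= T)%N ->
     [set w | ole (tau w) t] = [set w | boundary XR (XRt t w)].
  move=> t /andP[t1 tT]; apply/seteqP; split => w /=.
    rewrite /ole; case E: (tau w) => [s|] //= st.
    have [_ Ps _] := ft_some E.
    rewrite /XRt /XRproc; case: t t1 tT st => // t _ tT st.
    by rewrite E st (minn_idPl st); exact: proj_bd HQ Ps.
  move=> [_ Hb]; rewrite /ole; case E: (tau w) => [s|] /=.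
    case: (leqP s t) => // ts; exfalso; apply: Hb.
    rewrite XRE; last by move=> s'; rewrite E => -[<-].
    by apply: notI => // s'; rewrite E => -[<-].
  apply: Hb; rewrite XRE; last by move=> s'; rewrite E.
  by apply: notI => // s'; rewrite E.
split => // t tT; apply/seteqP; split => w /=.
  move=> E; have [sT Ps Hmin] := ft_some E.
  have Ht : forall s, tau w = Some s -> (t < s)%N by move=> s; rewrite E => -[<-].
  rewrite XRE //; split; first exact: notI (ltnW tT) Ht.
  by rewrite -HS.
move=> [Hi Hn].
have Ht : forall s, tau w = Some s -> (t < s)%N.
  move=> s E; rewrite ltnNge; apply/negP => st.
  have [sT Ps _] := ft_some E.
  case: t tT Hi Hn st => [|t] tT Hi Hn st.
    by move: st; rewrite leqn0 => /eqP s0; apply: Ps; rewrite s0.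
  have Ho : ole (tau w) t.+1 by rewrite E.
  have /seteqP [h1 _] := part1 t.+1 (ltnW tT).
  by have [] := h1 w Ho.
move: Hn; rewrite XRE // -HS // => Hn.
case E: (tau w) => [s|]; last by exfalso; exact: (ft_none E _ tT Hn).
have [_ _ Hmin] := ft_some E; have ts := Ht s E.
congr Some; apply/eqP; rewrite eqn_leq ts andbT leqNgt; apply/negP => st.
exact: Hmin _ st Hn.
Qed.
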